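(* Let $m\in\mathbb{N}$, $m\geq 2$, let $\Sigma\subset\{0,1,\dots,m-1\}^{\mathbb{N}}$ be a (one-sided) subshift of finite type, and let $$A=\Big\{\sum_{i=1}^\infty \frac{x_i}{m^i}:(x_i)\in\Sigma\Big\}.$$ If $A$ is nowhere dense in $[0,1]$, then for every $t\in(0,1)$ that has a universal $m$-adic expansion, $$A-t\subset\mathbb{Q}^c,\qquad A+t\subset\mathbb{Q}^c,\qquad \frac{A}{t}\subset\mathbb{Q}^c.$$ Moreover, if $t\in(1,\infty)$ and $1/t$ has a universal $m$-adic expansion, then $tA\subset\mathbb{Q}^c$.
   Context: An $m$-adic expansion of $t\in(0,1)$ is a sequence $(t_k)\in\{0,1,\dots,m-1\}^{\mathbb{N}}$ with $t=\sum_{k\geq1}t_k m^{-k}$. Such an expansion is universal if for every $k\geq1$ and every word $x_1\cdots x_k\in\{0,\dots,m-1\}^k$ there is $k_0\in\mathbb{N}$ with $t_{k_0+1}\cdots t_{k_0+k}=x_1\cdots x_k$; $t$ has a universal $m$-adic expansion if some $m$-adic expansion of it is universal. A subshift of finite type over $\{0,\dots,m-1\}$ is the set of sequences in $\{0,\dots,m-1\}^{\mathbb{N}}$ avoiding a given finite list of forbidden words. Notation: $A\pm t=\{x\pm t:x\in A\}$, $tA=\{tx:x\in A\setminus\{0\}\}$, $\frac{A}{t}=\{t^{-1}x:x\in A\setminus\{0\}\}$. $\mathbb{Q}^c$ denotes the set of irrational real numbers. *)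

(* Defs.v *)
From Stdlib Require Import Reals List QArith.
Open Scope R_scope.

(* A digit sequence over {0,...,m-1}, indexed from 0: x 0 plays the role of x_1. *)
Definition digit_seq (m : nat) (x : nat -> nat) : Prop := forall k, (x k < m)%nat.

Definition madic_value (m : nat) (x : nat -> nat) (t : R) : Prop :=
  infinite_sum (fun i => INR (x i) / (INR m) ^ (S i)) t.

Definition occurs_at (x : nat -> nat) (w : list nat) (k0 : nat) : Prop :=
  forall j, (j < length w)%nat -> x (k0 + j)%nat = nth j w 0%nat.

Definition SFT (m : nat) (F : list (list nat)) (x : nat -> nat) : Prop :=
  digit_seq m x /\ forall w, In w F -> forall k0, ~ occurs_at x w k0.

Definition SFT_set (m : nat) (F : list (list nat)) (y : R) : Prop :=
  exists x, SFT m F x /\ madic_value m x y.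

Definition is_expansion (m : nat) (t : R) (x : nat -> nat) : Prop :=
  digit_seq m x /\ madic_value m x t.

Definition universal (m : nat) (x : nat -> nat) : Prop :=
  forall w : list nat, (1 <= length w)%nat -> (forall a, In a w -> (a < m)%nat) ->
    exists k0, occurs_at x w k0.

Definition has_universal_expansion (m : nat) (t : R) : Prop :=
  exists x, is_expansion m t x /\ universal m x.

Definition in_closure01 (A : R -> Prop) (z : R) : Prop :=
  0 <= z <= 1 /\ forall eps, eps > 0 -> exists a, A a /\ 0 <= a <= 1 /\ Rabs (z - a) < eps.

Definition nowhere_dense01 (A : R -> Prop) : Prop :=
  ~ exists z eps, 0 <= z <= 1 /\ eps > 0 /\
      forall y, 0 <= y <= 1 -> Rabs (y - z) < eps -> in_closure01 A y.

Definition irrational (y : R) : Prop := ~ exists q : Q, Q2R q = y.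

(* Main.v *)
Require Import Defs.
From Stdlib Require Import Reals List QArith ZArith Lra Lia Classical FunctionalExtensionality.
Open Scope R_scope.

Section S.
Variable m : nat.
Hypothesis Hm : (2 <= m)%nat.

Lemma Mpos : 0 < INR m.
Proof. apply lt_0_INR; lia. Qed.
Lemma Mge2 : 2 <= INR m.
Proof. replace 2 with (INR 2) by (simpl; lra). apply le_INR; lia. Qed.

Lemma sum_shift (x : nat -> nat) : forall n,
  sum_f_R0 (fun i => INR (x (S i)) / INR m ^ S i) n =
  INR m * sum_f_R0 (fun i => INR (x i) / INR m ^ S i) (S n) - INR (x 0%nat).
Proof.
  pose proof Mpos.
  induction n.
  - simpl. field. lra.
  - change (sum_f_R0 (fun i => INR (x (S i)) / INR m ^ S i) (S n)) with
      (sum_f_R0 (fun i => INR (x (S i)) / INR m ^ S i) n + INR (x (S (S n))) / INR m ^ S (S n)).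
    change (sum_f_R0 (fun i => INR (x i) / INR m ^ S i) (S (S n))) with
      (sum_f_R0 (fun i => INR (x i) / INR m ^ S i) (S n) + INR (x (S (S n))) / INR m ^ S (S (S n))).
    rewrite IHn. simpl. field. split; [|lra]. apply pow_nonzero; lra.
Qed.

Lemma value_shift (x : nat -> nat) v : madic_value m x v ->
  madic_value m (fun i => x (S i)) (INR m * v - INR (x 0%nat)).
Proof.
  pose proof Mpos as Hmp.
  intros H eps He. destruct (H (eps / INR m)) as [N HN].
  { apply Rdiv_lt_0_compat; lra. }
  exists N. intros n Hn. rewrite sum_shift. unfold R_dist.
  replace (INR m * sum_f_R0 (fun i => INR (x i) / INR m ^ S i) (S n) - INR (x 0%nat) -
     (INR m * v - INR (x 0%nat))) with
     (INR m * (sum_f_R0 (fun i => INR (x i) / INR m ^ S i) (S n) - v)) by ring.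
  rewrite Rabs_mult, Rabs_pos_eq by lra.
  assert (R_dist (sum_f_R0 (fun i => INR (x i) / INR m ^ S i) (S n)) v < eps / INR m)
    by (apply HN; lia).
  unfold R_dist in H0.
  apply Rmult_lt_compat_l with (r := INR m) in H0; [|lra].
  replace (INR m * (eps / INR m)) with eps in H0 by (field; lra). exact H0.
Qed.

Definition sh (x : nat -> nat) k := fun i => x (k + i)%nat.

Lemma value_iter (x : nat -> nat) v : madic_value m x v -> forall k,
  exists N : nat, madic_value m (sh x k) (INR m ^ k * v - INR N).
Proof.
  intros H k. induction k.
  - exists 0%nat. unfold sh. simpl. replace (1 * v - 0) with v by ring. exact H.
  - destruct IHk as [N HN]. exists (m * N + x k)%nat.
    apply value_shift in HN.
    replace (fun i => sh x k (S i)) with (sh x (S k)) in HN.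
    2:{ unfold sh. apply functional_extensionality. intro i. f_equal. lia. }
    unfold sh at 2 in HN. rewrite Nat.add_0_r in HN.
    rewrite plus_INR, mult_INR. simpl.
    replace (INR m * INR m ^ k * v - (INR m * INR N + INR (x k)))
      with (INR m * (INR m ^ k * v - INR N) - INR (x k)) by ring. exact HN.
Qed.

Lemma psum_bound (x : nat -> nat) : digit_seq m x -> forall n,
  0 <= sum_f_R0 (fun i => INR (x i) / INR m ^ S i) n <= 1 - / INR m ^ S n.
Proof.
  pose proof Mpos. intros Hd n.
  assert (Hx : forall i, 0 <= INR (x i) <= INR m - 1).
  { intro i. split. apply pos_INR. specialize (Hd i).
    replace (INR m - 1) with (INR (m - 1)). apply le_INR; lia.
    rewrite minus_INR by lia. simpl. ring. }
  induction n.
  - simpl. specialize (Hx 0%nat). split.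
    + apply Rmult_le_pos; [lra|]. left. apply Rinv_0_lt_compat. lra.
    + rewrite Rmult_1_r. unfold Rdiv. apply (Rmult_le_reg_r (INR m)); [lra|].
      rewrite Rmult_minus_distr_r. rewrite Rmult_assoc, Rinv_l by lra. lra.
  - change (sum_f_R0 (fun i => INR (x i) / INR m ^ S i) (S n)) with
      (sum_f_R0 (fun i => INR (x i) / INR m ^ S i) n + INR (x (S n)) / INR m ^ S (S n)).
    assert (Hp : 0 < INR m ^ S n) by (apply pow_lt; lra).
    specialize (Hx (S n)).
    assert (Hi : 0 < / INR m ^ S (S n)) by (apply Rinv_0_lt_compat; apply pow_lt; lra).
    assert (0 <= INR (x (S n)) / INR m ^ S (S n) <= (INR m - 1) / INR m ^ S (S n)).
    { unfold Rdiv. split. apply Rmult_le_pos; lra. apply Rmult_le_compat_r; lra. }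
    assert (1 - / INR m ^ S n + (INR m - 1) / INR m ^ S (S n) = 1 - / INR m ^ S (S n)).
    { simpl. field. repeat split; try apply pow_nonzero; lra. }
    lra.
Qed.

Lemma lim_le (f : nat -> R) l lo hi : infinite_sum f l ->
  (forall n, lo <= sum_f_R0 f n <= hi) -> lo <= l <= hi.
Proof.
  intros H Hb. split; apply Rnot_lt_le; intro C.
  - destruct (H (lo - l)) as [N HN]; [lra|]. specialize (HN N (le_n _)). specialize (Hb N).
    unfold R_dist in HN. apply Rabs_def2 in HN. lra.
  - destruct (H (l - hi)) as [N HN]; [lra|]. specialize (HN N (le_n _)). specialize (Hb N).
    unfold R_dist in HN. apply Rabs_def2 in HN. lra.
Qed.

Lemma value01 x v : digit_seq m x -> madic_value m x v -> 0 <= v <= 1.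
Proof.
  intros Hd Hv. apply (lim_le _ _ _ _ Hv). intro n. pose proof (psum_bound x Hd n).
  assert (0 < / INR m ^ S n) by (apply Rinv_0_lt_compat, pow_lt, Mpos). lra.
Qed.


Fixpoint wv (w : list nat) : nat :=
  match w with nil => 0%nat | d :: w' => (d * m ^ length w' + wv w')%nat end.

Lemma cyl (w : list nat) : forall x v, digit_seq m x -> madic_value m x v -> occurs_at x w 0 ->
  INR (wv w) <= v * INR m ^ length w <= INR (wv w) + 1.
Proof.
  induction w as [|d w IH]; intros x v Hd Hv Ho.
  - simpl. pose proof (value01 x v Hd Hv). lra.
  - assert (Hx0 : x 0%nat = d) by (apply (Ho 0%nat); simpl; lia).
    assert (Hd' : digit_seq m (fun i => x (S i))) by (intro i; apply Hd).
    assert (Ho' : occurs_at (fun i => x (S i)) w 0).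
    { intros j Hj. simpl. apply (Ho (S j)). simpl. lia. }
    pose proof (IH _ _ Hd' (value_shift x v Hv) Ho') as H.
    rewrite Hx0 in H. simpl length. simpl wv. rewrite plus_INR, mult_INR, pow_INR.
    assert (E : (INR m * v - INR d) * INR m ^ length w = v * INR m ^ S (length w) - INR d * INR m ^ length w)
      by (simpl; ring).
    rewrite E in H. lra.
Qed.

Lemma mkword : forall L P, (P < m ^ L)%nat -> exists w, length w = L /\
  (forall a, In a w -> (a < m)%nat) /\ wv w = P.
Proof.
  induction L; intros P HP.
  - exists nil. simpl in *. repeat split; try tauto. lia.
  - assert (Hpos : (m ^ L <> 0)%nat) by (apply Nat.pow_nonzero; lia).
    destruct (IHL (P mod m ^ L)%nat) as [w [H1 [H2 H3]]].
    { apply Nat.mod_upper_bound; auto. }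
    exists ((P / m ^ L)%nat :: w). repeat split.
    + simpl. lia.
    + intros a [<-|Ha]; auto. apply Nat.Div0.div_lt_upper_bound.
      rewrite Nat.mul_comm, <- Nat.pow_succ_r'. exact HP.
    + simpl. rewrite H1, H3. rewrite (Nat.div_mod P (m ^ L)) at 3 by auto. lia.
Qed.

Lemma SFT_sh F x k : SFT m F x -> SFT m F (sh x k).
Proof.
  intros [Hd Hf]. split.
  - intro i. apply Hd.
  - intros w Hw k0 Ho. apply (Hf w Hw (k + k0)%nat). intros j Hj.
    rewrite <- (Ho j Hj). unfold sh. f_equal. lia.
Qed.

End S.

Section G.
Variable A : R -> Prop.
Hypothesis HA : forall v, A v -> 0 <= v <= 1.
Hypothesis ND : nowhere_dense01 A.

Lemma nd_interval c d : c < d -> exists c' d', c <= c' /\ c' < d' /\ d' <= d /\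
  forall v, A v -> ~ (c' < v < d').
Proof.
  intro Hcd.
  destruct (Rle_lt_dec d 0) as [H0|H0].
  { exists c, d. repeat split; try lra. intros v Hv C. pose proof (HA v Hv). lra. }
  destruct (Rle_lt_dec 1 c) as [H1|H1].
  { exists c, d. repeat split; try lra. intros v Hv C. pose proof (HA v Hv). lra. }
  set (c1 := Rmax c 0). set (d1 := Rmin d 1).
  assert (Hc1 : c <= c1 /\ 0 <= c1) by (unfold c1, Rmax; destruct Rle_dec; lra).
  assert (Hd1 : d1 <= d /\ d1 <= 1) by (unfold d1, Rmin; destruct Rle_dec; lra).
  assert (Hcd1 : c1 < d1) by (unfold c1, d1, Rmax, Rmin; destruct Rle_dec; destruct Rle_dec; lra).
  destruct (classic (exists y, 0 <= y <= 1 /\ Rabs (y - (c1+d1)/2) < (d1-c1)/2 /\ ~ in_closure01 A y))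
    as [[y [Hy1 [Hy2 Hy3]]]|Hno].
  2:{ exfalso. apply ND. exists ((c1+d1)/2), ((d1-c1)/2). split; [lra|split; [lra|]].
      intros y0 Hy0 Hyz. apply NNPP. intro C. apply Hno. exists y0. auto. }
  apply Rabs_def2 in Hy2.
  assert (Hex : exists eps, eps > 0 /\ forall a, A a -> 0 <= a <= 1 -> Rabs (y - a) >= eps).
  { apply NNPP. intro C. apply Hy3. split; auto. intros eps He.
    apply NNPP. intro C2. apply C. exists eps. split; auto. intros a Ha Ha1.
    apply Rnot_lt_ge. intro C3. apply C2. exists a. auto. }
  destruct Hex as [eps [He Hy]].
  assert (Hmx : c1 <= Rmax c1 (y - eps) /\ y - eps <= Rmax c1 (y - eps) /\ Rmax c1 (y - eps) < y)
    by (unfold Rmax; destruct Rle_dec; lra).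
  assert (Hmn : Rmin d1 (y + eps) <= d1 /\ Rmin d1 (y + eps) <= y + eps /\ y < Rmin d1 (y + eps))
    by (unfold Rmin; destruct Rle_dec; lra).
  exists (Rmax c1 (y - eps)), (Rmin d1 (y + eps)).
  repeat split; try lra.
  intros v Hv [C1 C2]. pose proof (HA v Hv) as Hb. specialize (Hy v Hv Hb).
  assert (Rabs (y - v) < eps) by (apply Rabs_def1; lra). lra.
Qed.

Lemma affine_pos s e c d : 0 < s -> c < d -> exists c' d', c <= c' /\ c' < d' /\ d' <= d /\
  forall v, A v -> ~ (c' < s * v + e < d').
Proof.
  intros Hs Hcd.
  assert (Hh : (c - e) / s < (d - e) / s).
  { unfold Rdiv. apply Rmult_lt_compat_r. apply Rinv_0_lt_compat; lra. lra. }
  destruct (nd_interval _ _ Hh) as [c1 [d1 [H1 [H2 [H3 H4]]]]].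
  exists (s * c1 + e), (s * d1 + e).
  assert (Ec : s * ((c - e) / s) = c - e) by (field; lra).
  assert (Ed : s * ((d - e) / s) = d - e) by (field; lra).
  apply (Rmult_le_compat_l s) in H1; [|lra].
  apply (Rmult_le_compat_l s) in H3; [|lra].
  apply (Rmult_lt_compat_l s) in H2; [|lra].
  repeat split; try lra.
  intros v Hv [C1 C2]. apply (H4 v Hv). split.
  - apply (Rmult_lt_reg_l s); lra.
  - apply (Rmult_lt_reg_l s); lra.
Qed.

Lemma affine_avoid s e c d : s <> 0 -> c < d -> exists c' d', c <= c' /\ c' < d' /\ d' <= d /\
  forall v, A v -> ~ (c' < s * v + e < d').
Proof.
  intros Hs Hcd. destruct (Rlt_dec 0 s) as [Hp|Hp].
  - apply affine_pos; auto.
  - destruct (affine_pos (- s) (- e) (- d) (- c)) as [c1 [d1 [H1 [H2 [H3 H4]]]]]; try lra.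
    exists (- d1), (- c1). repeat split; try lra.
    intros v Hv C. apply (H4 v Hv). lra.
Qed.

Lemma multi_avoid s (e : nat -> R) n : s <> 0 -> forall c d, c < d ->
  exists c' d', c <= c' /\ c' < d' /\ d' <= d /\
  forall j, (j < n)%nat -> forall v, A v -> ~ (c' < s * v + e j < d').
Proof.
  intros Hs. induction n; intros c d Hcd.
  - exists c, d. repeat split; try lra. intros j Hj. lia.
  - destruct (IHn c d Hcd) as [c1 [d1 [H1 [H2 [H3 H4]]]]].
    destruct (affine_avoid s (e n) c1 d1 Hs H2) as [c2 [d2 [G1 [G2 [G3 G4]]]]].
    exists c2, d2. repeat split; try lra.
    intros j Hj v Hv C. destruct (Nat.eq_dec j n) as [->|Hne].
    + apply (G4 v Hv C).
    + apply (H4 j ltac:(lia) v Hv). lra.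
Qed.

End G.

Lemma pow_big m : (2 <= m)%nat -> forall k, INR k + 1 <= INR m ^ k.
Proof.
  intros Hm. pose proof (Mge2 m Hm). induction k.
  - simpl. lra.
  - rewrite S_INR. simpl. assert (0 <= INR k) by apply pos_INR. nra.
Qed.

Lemma key m F (Hm : (2 <= m)%nat) (ND : nowhere_dense01 (SFT_set m F)) a y (S0 R0 D : Z) :
  (0 < D)%Z -> S0 <> 0%Z -> SFT_set m F a -> IZR D * y = IZR S0 * a + IZR R0 ->
  has_universal_expansion m y -> False.
Proof.
  intros HD HS Ha Heq Hu.
  set (A := SFT_set m F).
  assert (HA : forall v, A v -> 0 <= v <= 1).
  { intros v [x [[Hxd _] Hxv]]. exact (value01 m Hm x v Hxd Hxv). }
  assert (HDr : 0 < IZR D) by (apply IZR_lt; lia).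
  assert (HSr : IZR S0 <> 0) by (apply not_0_IZR; auto).
  set (s := IZR S0 / IZR D).
  set (e := fun j : nat => (IZR (- Z.abs S0) + INR j) / IZR D).
  set (n := Z.to_nat (D + 2 * Z.abs S0 + 1)).
  assert (Hs : s <> 0). { unfold s. unfold Rdiv. apply Rmult_integral_contrapositive.
    split; auto. apply Rinv_neq_0_compat. lra. }
  destruct (multi_avoid A HA ND s e n Hs 0 1 ltac:(lra)) as [c' [d' [H1 [H2 [H3 Hav]]]]].
  pose proof (Mpos m Hm) as Hmp.
  destruct (INR_unbounded (2 / (d' - c'))) as [n0 Hn0].
  set (L := S n0).
  set (Q := INR m ^ L).
  assert (HQ : Q * (d' - c') > 2).
  { pose proof (pow_big m Hm L). unfold Q. unfold L in *. rewrite S_INR in H.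
    assert (2 / (d' - c') * (d' - c') = 2) by (field; lra).
    assert (INR m ^ S n0 > 2 / (d' - c')) by lra.
    apply (Rmult_lt_compat_r (d' - c')) in H4; lra. }
  assert (HQp : 0 < Q) by (unfold Q; apply pow_lt; lra).
  destruct (archimed (c' * Q)) as [P1 P2].
  set (P := up (c' * Q)) in *.
  assert (HP0 : (0 < P)%Z). { apply lt_IZR. simpl. nra. }
  set (Pn := Z.to_nat P).
  assert (HPn : INR Pn = IZR P) by (unfold Pn; rewrite INR_IZR_INZ, Z2Nat.id; auto; lia).
  assert (HPlt : (Pn < m ^ L)%nat).
  { apply INR_lt. rewrite pow_INR. fold Q. nra. }
  destruct (mkword m Hm L Pn HPlt) as [w [Hw1 [Hw2 Hw3]]].
  destruct Hu as [u [[Hud Huv] Huniv]].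
  destruct (Huniv w ltac:(unfold L in Hw1; lia) Hw2) as [k Hk].
  destruct (value_iter m Hm u y Huv k) as [M HM].
  set (z := INR m ^ k * y - INR M) in *.
  assert (Hshd : digit_seq m (sh u k)) by (intro i; apply Hud).
  assert (Hsho : occurs_at (sh u k) w 0) by exact Hk.
  pose proof (cyl m Hm w (sh u k) z Hshd HM Hsho) as Hc.
  rewrite Hw3, Hw1, HPn in Hc. fold Q in Hc.
  assert (Hz1 : c' * Q < z * Q) by lra.
  assert (Hz2 : z * Q < d' * Q) by lra.
  apply Rmult_lt_reg_r in Hz1; auto. apply Rmult_lt_reg_r in Hz2; auto.
  destruct Ha as [x [Hx Hxv]].
  destruct (value_iter m Hm x a Hxv k) as [N HN].
  set (v := INR m ^ k * a - INR N) in *.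
  assert (Hv : A v) by (exists (sh x k); split; auto; apply SFT_sh; auto).
  set (i := (S0 * Z.of_nat N + Z.of_nat (m ^ k) * R0 - D * Z.of_nat M)%Z).
  assert (Hi : IZR i = IZR D * z - IZR S0 * v).
  { unfold i. rewrite minus_IZR, !plus_IZR, !mult_IZR, <- !INR_IZR_INZ, pow_INR.
    unfold z, v.
    replace (IZR D * (INR m ^ k * y - INR M) - IZR S0 * (INR m ^ k * a - INR N))
      with (INR m ^ k * (IZR D * y - IZR S0 * a) - IZR D * INR M + IZR S0 * INR N) by ring.
    rewrite Heq. ring. }
  pose proof (HA v Hv) as Hv01.
  assert (Hsv : Rabs (IZR S0 * v) <= IZR (Z.abs S0)).
  { rewrite Rabs_mult, abs_IZR, (Rabs_pos_eq v) by lra.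
    assert (0 <= Rabs (IZR S0)) by apply Rabs_pos. nra. }
  apply Rabs_le_between' in Hsv || idtac.
  assert (Hb : - IZR (Z.abs S0) <= IZR S0 * v <= IZR (Z.abs S0)).
  { pose proof (Rle_abs (IZR S0 * v)). pose proof (Rle_abs (- (IZR S0 * v))).
    rewrite Rabs_Ropp in H0. lra. }
  assert (Hzi : 0 < z < 1) by lra.
  assert (Hil : (- Z.abs S0 <= i)%Z).
  { apply le_IZR. rewrite opp_IZR. nra. }
  assert (Hiu : (i < D + Z.abs S0)%Z).
  { apply lt_IZR. rewrite plus_IZR. nra. }
  set (j := Z.to_nat (i + Z.abs S0)).
  assert (Hj : (j < n)%nat) by (unfold j, n; lia).
  apply (Hav j Hj v Hv).
  assert (Ej : IZR (- Z.abs S0) + INR j = IZR i).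
  { unfold j. rewrite INR_IZR_INZ, Z2Nat.id by lia. rewrite plus_IZR, opp_IZR. ring. }
  assert (s * v + e j = z).
  { unfold s, e. rewrite Ej, Hi. field. lra. }
  lra.
Qed.

Lemma Q2R_eq q r : Q2R q = r -> IZR (Z.pos (Qden q)) * r = IZR (Qnum q) /\ 0 < IZR (Z.pos (Qden q)).
Proof.
  intros H. assert (Hp : 0 < IZR (Z.pos (Qden q))) by (apply IZR_lt; lia).
  split; auto. rewrite <- H. unfold Q2R. simpl. field. lra.
Qed.

Lemma key2 m F (Hm : (2 <= m)%nat) (ND : nowhere_dense01 (SFT_set m F)) a y (d nn : Z) :
  (0 < d)%Z -> a <> 0 -> SFT_set m F a -> IZR d * a = IZR nn * y ->
  has_universal_expansion m y -> False.
Proof.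
  intros Hd Ha HA Heq Hu.
  assert (Hn : nn <> 0%Z).
  { intro C. subst. rewrite Rmult_0_l in Heq. apply Rmult_integral in Heq.
    destruct Heq as [C|C]; auto. apply eq_IZR_R0 in C. lia. }
  destruct (Z_lt_le_dec 0 nn) as [Hp|Hp].
  - apply (key m F Hm ND a y d 0 nn); auto; try lia. rewrite <- Heq. simpl. ring.
  - apply (key m F Hm ND a y (- d) 0 (- nn)); auto; try lia.
    rewrite !opp_IZR. simpl. rewrite Ropp_mult_distr_l_reverse, <- Heq. ring.
Qed.

Theorem corollary3 (m : nat) (F : list (list nat)) :
  (2 <= m)%nat ->
  nowhere_dense01 (SFT_set m F) ->
  (forall t : R, 0 < t < 1 -> has_universal_expansion m t ->
     (forall a, SFT_set m F a -> irrational (a - t)) /\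
     (forall a, SFT_set m F a -> irrational (a + t)) /\
     (forall a, SFT_set m F a -> a <> 0 -> irrational (a / t))) /\
  (forall t : R, 1 < t -> has_universal_expansion m (/ t) ->
     forall a, SFT_set m F a -> a <> 0 -> irrational (t * a)).
Proof.
  intros Hm ND. split.
  - intros t Ht Hu. split; [|split].
    + intros a Ha [q Hq]. apply Q2R_eq in Hq as [Hq Hp].
      apply (key m F Hm ND a t (Z.pos (Qden q)) (- Qnum q) (Z.pos (Qden q))); auto; try lia.
      rewrite opp_IZR, <- Hq. ring.
    + intros a Ha [q Hq]. apply Q2R_eq in Hq as [Hq Hp].
      apply (key m F Hm ND a t (- Z.pos (Qden q)) (Qnum q) (Z.pos (Qden q))); auto; try lia.
      rewrite opp_IZR, <- Hq. ring.
    + intros a Ha Ha0 [q Hq]. apply Q2R_eq in Hq as [Hq Hp].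
      apply (key2 m F Hm ND a t (Z.pos (Qden q)) (Qnum q)); auto; try lia.
      rewrite <- Hq. field. lra.
  - intros t Ht Hu a Ha Ha0 [q Hq]. apply Q2R_eq in Hq as [Hq Hp].
    apply (key2 m F Hm ND a (/ t) (Z.pos (Qden q)) (Qnum q)); auto; try lia.
    rewrite <- Hq. field. lra.
Qed.
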